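(* Let $G$ be an amenable (discrete) group, let $(X,u)$ and $(Y,v)$ be $G$-spaces with $X$ $G$-complemented in its bidual, and let $\Omega:Y\curvearrowright X$ be a quasi-linear map between them. Assume that for every $g\in G$ there is a linear map $L_g:Y_{00}\to X_\infty$ such that $T_g=\begin{pmatrix}u(g)&L_g\\0&v(g)\end{pmatrix}$, i.e. $T_g(x,y)=(u(g)x+L_gy,v(g)y)$, is a bounded invertible operator on $X\oplus_\Omega Y$, with $\sup_{g\in G}\|T_g\|\|T_g^{-1}\|<\infty$. Then the action of $G$ is compatible with $\Omega$, and the associated derivation $g\mapsto d(g)$ can be chosen so that $d(g)-L_g$ maps $Y_{00}$ into $X$ with $\sup_{g}\sup_{y\in Y_{00},\|y\|\le1}\|d(g)y-L_gy\|_X<\infty$.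
   Context: $G$-space: Banach space with bounded action $g\mapsto u(g)$. A quasi-linear map $\Omega:Y\curvearrowright X$ between $G$-spaces $(Y,v),(X,u)$ is a homogeneous map $\Omega:Y_{00}\to X_\infty$, with $Y_{00}\subseteq Y$ dense and $v(G)$-invariant, $X_\infty\supseteq X$ a vector space to which $u$ extends linearly, and $\|\Omega(y+y')-\Omega y-\Omega y'\|_X\le C(\|y\|+\|y'\|)$. $X\oplus_\Omega Y$ is the completion of $\{(x,y)\in X_\infty\times Y_{00}:x-\Omega y\in X\}$ under $\|x-\Omega y\|_X+\|y\|_Y$. A derivation is a map $g\mapsto d(g)$, $d(g):Y_{00}\to X_\infty$ linear, with $d(gh)=u(g)d(h)+d(g)v(h)$. The action is compatible with $\Omega$ if there is a derivation $d$ and $C$ with $\|u(g)\Omega y-\Omega v(g)y+d(g)y\|_X\le C\|y\|_Y$ for all $g,y$; equivalently $g\mapsto\begin{pmatrix}u(g)&d(g)\\0&v(g)\end{pmatrix}$ is a bounded representation on $X\oplus_\Omega Y$. $X$ is $G$-complemented in its bidual if there is a bounded projection $P:X^{**}\to X$ with $Pu(g)^{**}=u(g)P$. *)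

(* Defs.v *)
From Stdlib Require Export Reals.
Open Scope R_scope.

Record VSpace := {
  vcar :> Type;
  vzero : vcar;
  vadd : vcar -> vcar -> vcar;
  vopp : vcar -> vcar;
  vscal : R -> vcar -> vcar;
  vadd_assoc : forall x y z, vadd x (vadd y z) = vadd (vadd x y) z;
  vadd_comm : forall x y, vadd x y = vadd y x;
  vadd_zero : forall x, vadd x vzero = x;
  vadd_opp : forall x, vadd x (vopp x) = vzero;
  vscal_one : forall x, vscal 1 x = x;
  vscal_assoc : forall a b x, vscal a (vscal b x) = vscal (a * b) x;
  vscal_distr_v : forall a x y, vscal a (vadd x y) = vadd (vscal a x) (vscal a y);
  vscal_distr_s : forall a b x, vscal (a + b) x = vadd (vscal a x) (vscal b x)
}.
Arguments vzero {_}.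
Arguments vadd {_} _ _.
Arguments vopp {_} _.
Arguments vscal {_} _ _.

Definition vsub {V : VSpace} (x y : V) : V := vadd x (vopp y).

Record NSpace := {
  nvs :> VSpace;
  norm : nvs -> R;
  norm_nonneg : forall x, 0 <= norm x;
  norm_eq0 : forall x, norm x = 0 -> x = vzero;
  norm_triangle : forall x y, norm (vadd x y) <= norm x + norm y;
  norm_scal : forall a x, norm (vscal a x) = Rabs a * norm x
}.
Arguments norm {_} _.

Definition complete (X : NSpace) : Prop :=
  forall s : nat -> X,
    (forall eps, 0 < eps -> exists N, forall m n, (N <= m)%nat -> (N <= n)%nat ->
        norm (vsub (s m) (s n)) < eps) ->
    exists l : X, forall eps, 0 < eps -> exists N, forall n, (N <= n)%nat ->
        norm (vsub (s n) l) < eps.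

Definition banach (X : NSpace) : Prop := complete X.

Definition is_linmap {V W : VSpace} (f : V -> W) : Prop :=
  (forall x y, f (vadd x y) = vadd (f x) (f y)) /\
  (forall a x, f (vscal a x) = vscal a (f x)).

Definition is_linmap_on {V W : VSpace} (P : V -> Prop) (f : V -> W) : Prop :=
  (forall x y, P x -> P y -> f (vadd x y) = vadd (f x) (f y)) /\
  (forall a x, P x -> f (vscal a x) = vscal a (f x)).

Definition is_linfun {V : VSpace} (f : V -> R) : Prop :=
  (forall x y, f (vadd x y) = f x + f y) /\ (forall a x, f (vscal a x) = a * f x).

Record Group := {
  gcar :> Type;
  gmul : gcar -> gcar -> gcar;
  ginv : gcar -> gcar;
  gone : gcar;
  gmul_assoc : forall a b c, gmul a (gmul b c) = gmul (gmul a b) c;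
  gmul_one_l : forall a, gmul gone a = a;
  gmul_one_r : forall a, gmul a gone = a;
  gmul_inv_l : forall a, gmul (ginv a) a = gone;
  gmul_inv_r : forall a, gmul a (ginv a) = gone
}.
Arguments gmul {_} _ _.
Arguments ginv {_} _.
Arguments gone {_}.

Definition bounded_fun {G : Group} (f : G -> R) : Prop := exists M, forall g, Rabs (f g) <= M.

Definition amenable (G : Group) : Prop :=
  exists m : (G -> R) -> R,
    (forall f1 f2, bounded_fun f1 -> bounded_fun f2 ->
        m (fun g => f1 g + f2 g) = m f1 + m f2) /\
    (forall a f, bounded_fun f -> m (fun g => a * f g) = a * m f) /\
    (forall f, bounded_fun f -> (forall g, 0 <= f g) -> 0 <= m f) /\
    m (fun _ => 1) = 1 /\
    (forall f h, bounded_fun f -> m (fun g => f (gmul h g)) = m f).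

Definition is_action {G : Group} {V : VSpace} (w : G -> V -> V) : Prop :=
  (forall g, is_linmap (w g)) /\
  (forall g h x, w (gmul g h) x = w g (w h x)) /\
  (forall x, w gone x = x).

Definition Gspace {G : Group} (X : NSpace) (u : G -> X -> X) : Prop :=
  banach X /\ is_action u /\ exists M, forall g x, norm (u g x) <= M * norm x.

Definition fbounded {X : NSpace} (f : X -> R) (M : R) : Prop :=
  forall x, Rabs (f x) <= M * norm x.

Definition Dual (X : NSpace) : Type :=
  { f : X -> R | is_linfun f /\ exists M, fbounded f M }.

(* Phi : Dual X -> R is an element of X** : linear and bounded
   (|Phi f| <= C ||f|| expressed without naming the operator norm) *)
Definition is_bidual {X : NSpace} (Phi : Dual X -> R) : Prop :=
  (forall f1 f2 f3 : Dual X,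
      (forall x, proj1_sig f3 x = proj1_sig f1 x + proj1_sig f2 x) ->
      Phi f3 = Phi f1 + Phi f2) /\
  (forall a (f1 f2 : Dual X), (forall x, proj1_sig f2 x = a * proj1_sig f1 x) ->
      Phi f2 = a * Phi f1) /\
  (exists C, forall (f : Dual X) M, fbounded (proj1_sig f) M -> Rabs (Phi f) <= C * M).

Definition bidual_norm_le {X : NSpace} (Phi : Dual X -> R) (K : R) : Prop :=
  forall (f : Dual X) M, fbounded (proj1_sig f) M -> Rabs (Phi f) <= K * M.

(* X is G-complemented in its bidual: bounded projection P : X** -> X
   (P o J = id, J the canonical embedding) with P u(g)** = u(g) P. *)
Definition G_complemented_in_bidual {G : Group} (X : NSpace) (u : G -> X -> X) : Prop :=
  exists P : (Dual X -> R) -> X,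
    (forall Phi1 Phi2 Phi3, is_bidual Phi1 -> is_bidual Phi2 -> is_bidual Phi3 ->
        (forall f, Phi3 f = Phi1 f + Phi2 f) -> P Phi3 = vadd (P Phi1) (P Phi2)) /\
    (forall a Phi1 Phi2, is_bidual Phi1 -> is_bidual Phi2 ->
        (forall f, Phi2 f = a * Phi1 f) -> P Phi2 = vscal a (P Phi1)) /\
    (exists C, forall Phi K, is_bidual Phi -> bidual_norm_le Phi K -> norm (P Phi) <= C * K) /\
    (forall x : X, P (fun f => proj1_sig f x) = x) /\
    (forall g Phi Phi', is_bidual Phi -> is_bidual Phi' ->
        (* Phi' = u(g)** Phi, i.e. Phi' f = Phi (f o u(g)) *)
        (forall f f' : Dual X, (forall x, proj1_sig f' x = proj1_sig f (u g x)) -> Phi' f = Phi f') ->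
        P Phi' = u g (P Phi)).

Definition inX_le {X : NSpace} {Xinf : VSpace} (iota : X -> Xinf) (z : Xinf) (K : R) : Prop :=
  exists x : X, iota x = z /\ norm x <= K.

Definition inX {X : NSpace} {Xinf : VSpace} (iota : X -> Xinf) (z : Xinf) : Prop :=
  exists x : X, iota x = z.

Definition subspace {V : VSpace} (P : V -> Prop) : Prop :=
  P vzero /\ (forall x y, P x -> P y -> P (vadd x y)) /\ (forall a x, P x -> P (vscal a x)).

Definition dense {Y : NSpace} (P : Y -> Prop) : Prop :=
  forall y eps, 0 < eps -> exists y0, P y0 /\ norm (vsub y y0) < eps.

(* The data (Y00, X_oo, iota, uinf) of the context:
   Y00 dense v(G)-invariant subspace of Y; X_oo a vector space containing X
   (via the injective linear map iota), to which the action u extends linearly (uinf). *)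
Definition QL_setting {G : Group} (X Y : NSpace) (u : G -> X -> X) (v : G -> Y -> Y)
    (Y00 : Y -> Prop) (Xinf : VSpace) (iota : X -> Xinf) (uinf : G -> Xinf -> Xinf) : Prop :=
  subspace Y00 /\ dense Y00 /\ (forall g y, Y00 y -> Y00 (v g y)) /\
  is_linmap iota /\ (forall x1 x2, iota x1 = iota x2 -> x1 = x2) /\
  is_action uinf /\ (forall g x, uinf g (iota x) = iota (u g x)).

Definition quasi_linear {X Y : NSpace} {Xinf : VSpace} (Y00 : Y -> Prop)
    (iota : X -> Xinf) (Omega : Y -> Xinf) : Prop :=
  (forall a y, Y00 y -> Omega (vscal a y) = vscal a (Omega y)) /\
  exists C, forall y y', Y00 y -> Y00 y' ->
    inX_le iota (vsub (Omega (vadd y y')) (vadd (Omega y) (Omega y'))) (C * (norm y + norm y')).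

(* dense part D = {(z,y) in X_oo x Y00 : z - Omega y in X}; its quasi-norm
   ||z - Omega y|| + ||y||; X (+)_Omega Y is its completion. *)
Definition inD {X Y : NSpace} {Xinf : VSpace} (Y00 : Y -> Prop) (iota : X -> Xinf)
    (Omega : Y -> Xinf) (z : Xinf) (y : Y) : Prop :=
  Y00 y /\ inX iota (vsub z (Omega y)).

Definition qnorm_is {X Y : NSpace} {Xinf : VSpace} (Y00 : Y -> Prop) (iota : X -> Xinf)
    (Omega : Y -> Xinf) (z : Xinf) (y : Y) (q : R) : Prop :=
  Y00 y /\ exists x : X, iota x = vsub z (Omega y) /\ q = norm x + norm y.

(* The operator T(z,y) = (uinf g z + L y, v g y), given on D, extends to a bounded
   invertible operator of the completion X (+)_Omega Y with ||T|| <= a, ||T^-1|| <= b.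
   Since D is dense, this holds iff T maps D into D, ||T w|| <= a ||w||,
   ||w|| <= b ||T w||, and T(D) is dense in D. *)
Definition twisted_bdd_invertible {G : Group} {X Y : NSpace} {Xinf : VSpace}
    (Y00 : Y -> Prop) (iota : X -> Xinf) (Omega : Y -> Xinf)
    (uinf : G -> Xinf -> Xinf) (v : G -> Y -> Y) (g : G) (L : Y -> Xinf) (a b : R) : Prop :=
  let T1 := fun z y => vadd (uinf g z) (L y) in
  let T2 := fun (y : Y) => v g y in
  (forall z y, inD Y00 iota Omega z y -> inD Y00 iota Omega (T1 z y) (T2 y)) /\
  (forall z y q q', qnorm_is Y00 iota Omega z y q ->
      qnorm_is Y00 iota Omega (T1 z y) (T2 y) q' -> q' <= a * q /\ q <= b * q') /\
  (forall z y eps, inD Y00 iota Omega z y -> 0 < eps ->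
      exists z0 y0, inD Y00 iota Omega z0 y0 /\
        exists q, qnorm_is Y00 iota Omega (vsub z (T1 z0 y0)) (vsub y (T2 y0)) q /\ q < eps).

Definition derivation {G : Group} {Y : NSpace} {Xinf : VSpace} (Y00 : Y -> Prop)
    (uinf : G -> Xinf -> Xinf) (v : G -> Y -> Y) (d : G -> Y -> Xinf) : Prop :=
  (forall g, is_linmap_on Y00 (d g)) /\
  (forall g h y, Y00 y -> d (gmul g h) y = vadd (uinf g (d h y)) (d g (v h y))).

Definition compatible_via {G : Group} {X Y : NSpace} {Xinf : VSpace} (Y00 : Y -> Prop)
    (iota : X -> Xinf) (Omega : Y -> Xinf) (uinf : G -> Xinf -> Xinf) (v : G -> Y -> Y)
    (d : G -> Y -> Xinf) : Prop :=
  derivation Y00 uinf v d /\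
  exists C, forall g y, Y00 y ->
    inX_le iota (vadd (vsub (uinf g (Omega y)) (Omega (v g y))) (d g y)) (C * norm y).

(* Main.v *)
Require Import Defs.
From Stdlib Require Import Reals Lra Lia ZArith List Classical FunctionalExtensionality ClassicalEpsilon.
Open Scope R_scope.
Arguments vadd_assoc {_} _ _ _. Arguments vadd_comm {_} _ _. Arguments vadd_zero {_} _.
Arguments vadd_opp {_} _. Arguments vscal_one {_} _. Arguments vscal_assoc {_} _ _ _.
Arguments vscal_distr_v {_} _ _ _. Arguments vscal_distr_s {_} _ _ _.
Arguments norm_nonneg {_} _. Arguments norm_eq0 {_} _ _. Arguments norm_triangle {_} _ _.
Arguments norm_scal {_} _ _.

Section VAlg.
Context {V : VSpace}.
Lemma vadd0l (x : V) : vadd vzero x = x.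
Proof. rewrite vadd_comm; apply vadd_zero. Qed.
Lemma vscal0 (x : V) : vscal 0 x = vzero.
Proof.
  assert (H : vscal 0 x = vadd (vscal 0 x) (vscal 0 x)).
  { rewrite <- vscal_distr_s. f_equal. ring. }
  assert (H2 := f_equal (fun z => vadd z (vopp (vscal 0 x))) H). simpl in H2.
  rewrite vadd_opp, <- vadd_assoc, vadd_opp, vadd_zero in H2. auto.
Qed.
Lemma vopp_unique (x y : V) : vadd x y = vzero -> y = vopp x.
Proof.
  intro H. rewrite <- (vadd0l y), <- (vadd_opp x), (vadd_comm x), <- vadd_assoc, H, vadd_zero. auto.
Qed.
Lemma vscal_opp (r : R) (x : V) : vscal (- r) x = vopp (vscal r x).
Proof. apply vopp_unique. rewrite <- vscal_distr_s. replace (r + - r) with 0 by ring. apply vscal0. Qed.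
Lemma vsub_eq0 (x y : V) : vsub x y = vzero -> x = y.
Proof.
  unfold vsub; intro H.
  rewrite <- (vadd_zero x), <- (vadd_opp y), (vadd_comm y), vadd_assoc, H, vadd0l. auto.
Qed.
End VAlg.

Inductive vex := At (n : nat) | Zr | Ad (a b : vex) | Op (a : vex) | Sb (a b : vex).

Fixpoint vinterp (V : VSpace) (env : list V) (e : vex) : V :=
  match e with
  | At n => nth n env vzero
  | Zr => vzero
  | Ad a b => vadd (vinterp V env a) (vinterp V env b)
  | Op a => vopp (vinterp V env a)
  | Sb a b => vsub (vinterp V env a) (vinterp V env b)
  end.

Fixpoint addl (l1 l2 : list Z) : list Z :=
  match l1, l2 with
  | nil, _ => l2
  | _, nil => l1
  | a :: l1', b :: l2' => (a + b)%Z :: addl l1' l2'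
  end.
Definition oppl (l : list Z) := map Z.opp l.
Fixpoint atl (n : nat) : list Z := match n with O => 1%Z :: nil | S n => 0%Z :: atl n end.
Fixpoint vnf (e : vex) : list Z :=
  match e with
  | At n => atl n | Zr => nil | Ad a b => addl (vnf a) (vnf b)
  | Op a => oppl (vnf a) | Sb a b => addl (vnf a) (oppl (vnf b)) end.

Fixpoint den (V : VSpace) (env : list V) (l : list Z) : V :=
  match env with
  | nil => vzero
  | x :: e => vadd (vscal (IZR (hd 0%Z l)) x) (den V e (tl l))
  end.

Lemma hd_addl l1 l2 : hd 0%Z (addl l1 l2) = (hd 0%Z l1 + hd 0%Z l2)%Z.
Proof. destruct l1, l2; simpl; lia. Qed.
Lemma tl_addl l1 l2 : tl (addl l1 l2) = addl (tl l1) (tl l2).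
Proof. destruct l1, l2; simpl; auto. destruct l1; auto. Qed.

Lemma den_add V env : forall l1 l2, den V env (addl l1 l2) = vadd (den V env l1) (den V env l2).
Proof.
  induction env as [|x e IH]; intros l1 l2; simpl.
  - symmetry; apply vadd_zero.
  - rewrite hd_addl, tl_addl, IH, plus_IZR, vscal_distr_s.
    set (a := vscal _ x); set (b := vscal _ x); set (c := den V e (tl l1)); set (d := den V e (tl l2)).
    rewrite <- !vadd_assoc. f_equal. rewrite !vadd_assoc. f_equal. apply vadd_comm.
Qed.

Lemma den_opp V env : forall l, den V env (oppl l) = vopp (den V env l).
Proof.
  induction env as [|x e IH]; intros l; simpl.
  - apply vopp_unique, vadd_zero.
  - replace (hd 0%Z (oppl l)) with (- hd 0%Z l)%Z by (destruct l; simpl; lia).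
    replace (tl (oppl l)) with (oppl (tl l)) by (destruct l; reflexivity).
    rewrite IH, opp_IZR, vscal_opp. apply vopp_unique.
    set (a := vscal _ x); set (c := den V e (tl l)).
    rewrite <- vadd_assoc, (vadd_assoc c), (vadd_comm c (vopp a)), <- vadd_assoc, vadd_opp, vadd_zero, vadd_opp. auto.
Qed.

Lemma den_nil V env : den V env nil = vzero.
Proof. induction env; simpl; auto. rewrite IHenv, vscal0, vadd_zero. auto. Qed.

Lemma den_at V env : forall n, den V env (atl n) = nth n env vzero.
Proof.
  induction env as [|x e IH]; intros n; simpl.
  - destruct n; auto.
  - destruct n; simpl.
    + rewrite vscal_one, den_nil, vadd_zero; auto.
    + rewrite IH, vscal0, vadd0l; auto.
Qed.

Lemma vnf_ok V env e : vinterp V env e = den V env (vnf e).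
Proof.
  induction e; simpl.
  - symmetry; apply den_at.
  - symmetry; apply den_nil.
  - rewrite den_add, IHe1, IHe2; auto.
  - rewrite den_opp, IHe; auto.
  - unfold vsub. rewrite den_add, den_opp, IHe1, IHe2; auto.
Qed.

Lemma den_zeros V env : forall l, forallb (Z.eqb 0) l = true -> den V env l = vzero.
Proof.
  induction env as [|x e IH]; intros l Hl; simpl; auto.
  destruct l as [|z l]; simpl.
  - rewrite den_nil, vscal0, vadd_zero; auto.
  - simpl in Hl. apply andb_prop in Hl as [H1 H2]. destruct z; try discriminate.
    rewrite IH, vscal0, vadd_zero; auto.
Qed.

Lemma vsolve_ok V env e1 e2 : forallb (Z.eqb 0) (vnf (Sb e1 e2)) = true ->
  vinterp V env e1 = vinterp V env e2.
Proof.
  intro H. apply vsub_eq0. change (vsub _ _) with (vinterp V env (Sb e1 e2)).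
  rewrite vnf_ok. apply den_zeros; auto.
Qed.

Ltac vfind x l n :=
  match l with
  | nil => constr:(@None nat)
  | cons x _ => constr:(Some n)
  | cons _ ?l' => vfind x l' (S n)
  end.

Ltac vcollect t env :=
  match t with
  | vadd ?a ?b => let e := vcollect a env in vcollect b e
  | vsub ?a ?b => let e := vcollect a env in vcollect b e
  | vopp ?a => vcollect a env
  | vzero => env
  | _ => let r := vfind t env O in
         match r with
         | None => eval cbn [app] in (app env (cons t nil))
         | Some _ => env
         end
  end.

Ltac vreify t env :=
  match t with
  | vadd ?a ?b => let ra := vreify a env in let rb := vreify b env in constr:(Ad ra rb)
  | vsub ?a ?b => let ra := vreify a env in let rb := vreify b env in constr:(Sb ra rb)
  | vopp ?a => let ra := vreify a env in constr:(Op ra)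
  | vzero => constr:(Zr)
  | _ => let r := vfind t env O in
         match r with Some ?n => constr:(At n) end
  end.

Ltac vsolve :=
  match goal with
  | |- @eq (vcar ?V) ?l ?r =>
    let e0 := vcollect l (@nil (vcar V)) in
    let e1 := vcollect r e0 in
    let env := eval cbn [app] in e1 in
    let rl := vreify l env in
    let rr := vreify r env in
    change (vinterp V env rl = vinterp V env rr);
    apply vsolve_ok; vm_compute; reflexivity
  end.


Lemma norm_zero {X : NSpace} : norm (@vzero X) = 0.
Proof. rewrite <- (vscal0 (@vzero X)), norm_scal, Rabs_R0. ring. Qed.

Lemma vscal_zero {V : VSpace} (a : R) : vscal a (@vzero V) = vzero.
Proof. assert (H: @vzero V = vscal 0 vzero) by (symmetry; apply vscal0). rewrite H at 1. rewrite vscal_assoc, Rmult_0_r. apply vscal0. Qed.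

Lemma vscal_vopp {V : VSpace} (a : R) (x : V) : vscal a (vopp x) = vopp (vscal a x).
Proof. apply vopp_unique. rewrite <- vscal_distr_v, vadd_opp. apply vscal_zero. Qed.

Lemma lin_add {V W : VSpace} (f : V -> W) : is_linmap f -> forall x y, f (vadd x y) = vadd (f x) (f y).
Proof. intros [H _]; auto. Qed.
Lemma lin_scal {V W : VSpace} (f : V -> W) : is_linmap f -> forall a x, f (vscal a x) = vscal a (f x).
Proof. intros [_ H]; auto. Qed.
Lemma lin_zero {V W : VSpace} (f : V -> W) : is_linmap f -> f vzero = vzero.
Proof. intro H. assert (H0: @vzero V = vscal 0 vzero) by (symmetry; apply vscal0). rewrite H0, (lin_scal f H). apply vscal0. Qed.
Lemma lin_opp {V W : VSpace} (f : V -> W) : is_linmap f -> forall x, f (vopp x) = vopp (f x).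
Proof. intros H x. apply vopp_unique. rewrite <- (lin_add f H), vadd_opp. apply lin_zero; auto. Qed.
Lemma lin_sub {V W : VSpace} (f : V -> W) : is_linmap f -> forall x y, f (vsub x y) = vsub (f x) (f y).
Proof. intros H x y. unfold vsub. rewrite (lin_add f H), (lin_opp f H). auto. Qed.

Lemma norm_le_scal {X : NSpace} (M : R) (x : X) : norm x <= M * norm x -> True.
Proof. auto. Qed.

Lemma Rabs_le_inv x B : Rabs x <= B -> - B <= x <= B.
Proof. unfold Rabs; destruct Rcase_abs; intros; lra. Qed.

Lemma lon_add {V W : VSpace} (P : V -> Prop) (f : V -> W) : is_linmap_on P f -> forall x y, P x -> P y -> f (vadd x y) = vadd (f x) (f y).
Proof. intros [H _]; auto. Qed.
Lemma lon_scal {V W : VSpace} (P : V -> Prop) (f : V -> W) : is_linmap_on P f -> forall a x, P x -> f (vscal a x) = vscal a (f x).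
Proof. intros [_ H]; auto. Qed.
Lemma lon_zero {V W : VSpace} (P : V -> Prop) (f : V -> W) : P vzero -> is_linmap_on P f -> f vzero = vzero.
Proof. intros H0 H. assert (E0: @vzero V = vscal 0 vzero) by (symmetry; apply vscal0). rewrite E0, (lon_scal P f H) by auto. apply vscal0. Qed.

Lemma ginv_mul (G : Group) (g k : G) : ginv (gmul g k) = gmul (ginv k) (ginv g).
Proof.
  assert (H : gmul (gmul g k) (gmul (ginv k) (ginv g)) = gone).
  { rewrite gmul_assoc, <- (gmul_assoc _ g k), gmul_inv_r, gmul_one_r, gmul_inv_r. auto. }
  rewrite <- (gmul_one_r _ (ginv (gmul g k))), <- H, gmul_assoc, gmul_inv_l, gmul_one_l. auto.
Qed.

Section Mean.
Context (G : Group) (X : NSpace) (m : (G -> R) -> R)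
  (m_add : forall f1 f2, bounded_fun f1 -> bounded_fun f2 -> m (fun g => f1 g + f2 g) = m f1 + m f2)
  (m_scal : forall a f, bounded_fun f -> m (fun g => a * f g) = a * m f)
  (m_pos : forall f, bounded_fun f -> (forall g, 0 <= f g) -> 0 <= m f)
  (m_one : m (fun _ => 1) = 1)
  (m_inv : forall f h, bounded_fun f -> m (fun g => f (gmul h g)) = m f)
  (u : G -> X -> X) (u_lin : forall g, is_linmap (u g)) (Mu : R)
  (u_bd : forall g x, norm (u g x) <= Mu * norm x)
  (P : (Dual X -> R) -> X)
  (P_add : forall Phi1 Phi2 Phi3, is_bidual Phi1 -> is_bidual Phi2 -> is_bidual Phi3 ->
        (forall f, Phi3 f = Phi1 f + Phi2 f) -> P Phi3 = vadd (P Phi1) (P Phi2))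
  (P_scal : forall a Phi1 Phi2, is_bidual Phi1 -> is_bidual Phi2 ->
        (forall f, Phi2 f = a * Phi1 f) -> P Phi2 = vscal a (P Phi1))
  (Cp : R) (P_bd : forall Phi K, is_bidual Phi -> bidual_norm_le Phi K -> norm (P Phi) <= Cp * K)
  (P_J : forall x : X, P (fun f => proj1_sig f x) = x)
  (P_eq : forall g Phi Phi', is_bidual Phi -> is_bidual Phi' ->
        (forall f f' : Dual X, (forall x, proj1_sig f' x = proj1_sig f (u g x)) -> Phi' f = Phi f') ->
        P Phi' = u g (P Phi)).

Definition bdd (F : G -> X) := exists C, 0 <= C /\ forall k, norm (F k) <= C.
Definition Phi (F : G -> X) : Dual X -> R := fun f => m (fun k => proj1_sig f (F k)).
Definition E (F : G -> X) : X := P (Phi F).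

Definition NT := exists x0 : X, norm x0 <> 0.

Lemma triv_norm : ~ NT -> forall x : X, norm x = 0.
Proof. intros H x. destruct (Req_dec (norm x) 0); auto. exfalso; apply H; exists x; auto. Qed.

Lemma fb_nonneg (f : X -> R) M : NT -> fbounded f M -> 0 <= M.
Proof.
  intros [x0 Hx0] Hf. specialize (Hf x0). pose proof (Rabs_pos (f x0)).
  pose proof (norm_nonneg x0).
  destruct (Rle_dec 0 M); auto. exfalso. assert (0 < norm x0) by lra. nra.
Qed.

Lemma fb_triv (f : X -> R) M : ~ NT -> fbounded f M -> forall x, f x = 0.
Proof.
  intros H Hf x. specialize (Hf x). rewrite (triv_norm H x) in Hf.
  rewrite Rmult_0_r in Hf. pose proof (Rabs_pos (f x)).
  destruct (Req_dec (f x) 0); auto. pose proof (Rabs_pos_lt (f x) H1). lra.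
Qed.

Lemma dual_lin (f : Dual X) : is_linfun (proj1_sig f).
Proof. exact (proj1 (proj2_sig f)). Qed.

Lemma dual_bfun (f : Dual X) F : bdd F -> bounded_fun (fun k => proj1_sig f (F k)).
Proof.
  intros [C [HC HF]]. destruct (proj2 (proj2_sig f)) as [M HM].
  exists (Rabs M * C). intro k. specialize (HM (F k)). specialize (HF k).
  pose proof (norm_nonneg (F k)).
  eapply Rle_trans; [exact HM|].
  destruct (Rle_dec 0 M).
  - rewrite Rabs_right by lra. nra.
  - rewrite Rabs_left by lra. nra.
Qed.

Lemma m_const1 : bounded_fun (fun _ : G => 1).
Proof. exists 1. intros; rewrite Rabs_R1; lra. Qed.

Lemma m_constE c : m (fun _ => c) = c.
Proof.
  replace (fun _ : G => c) with (fun g : G => c * (fun _ => 1) g)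
    by (apply functional_extensionality; intros; simpl; ring).
  rewrite m_scal by apply m_const1. rewrite m_one. ring.
Qed.

Lemma m_abs h B : (forall k, Rabs (h k) <= B) -> Rabs (m h) <= B.
Proof.
  intro Hh. assert (bh : bounded_fun h) by (exists B; auto).
  assert (b1 : bounded_fun (fun _ : G => B)) by (exists (Rabs B); intros; lra).
  assert (bmh : bounded_fun (fun g => -1 * h g)).
  { exists B. intro k. rewrite Rabs_mult, (Rabs_left (-1)) by lra. specialize (Hh k). lra. }
  pose proof (m_pos (fun g => B + -1 * h g)) as H1.
  pose proof (m_pos (fun g => B + h g)) as H2.
  rewrite (m_add (fun _ => B) (fun g => -1 * h g)) in H1 by auto.
  rewrite (m_add (fun _ => B) h) in H2 by auto.
  rewrite m_constE in H1, H2. rewrite m_scal in H1 by auto.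
  assert (0 <= B + -1 * m h).
  { apply H1.
    - exists (Rabs B + B). intro k. eapply Rle_trans; [apply Rabs_triang|].
      rewrite Rabs_mult, (Rabs_left (-1)) by lra. specialize (Hh k). lra.
    - intro k. specialize (Hh k). apply Rabs_le_inv in Hh. lra. }
  assert (0 <= B + m h).
  { apply H2.
    - exists (Rabs B + B). intro k. eapply Rle_trans; [apply Rabs_triang|]. specialize (Hh k). lra.
    - intro k. specialize (Hh k). apply Rabs_le_inv in Hh. lra. }
  apply Rabs_le. lra.
Qed.

Lemma Phi_bound F C : 0 <= C -> (forall k, norm (F k) <= C) -> NT -> bidual_norm_le (Phi F) C.
Proof.
  intros HC HF Hnt f M Hf. unfold Phi.
  pose proof (fb_nonneg _ _ Hnt Hf).
  replace (C * M) with (M * C) by ring.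
  apply m_abs. intro k. eapply Rle_trans; [apply Hf|]. specialize (HF k).
  apply Rmult_le_compat_l; auto.
Qed.

Lemma Phi_bidual F : bdd F -> is_bidual (Phi F).
Proof.
  intros hF. assert (bf : forall f : Dual X, bounded_fun (fun k => proj1_sig f (F k))) by (intro f; apply dual_bfun; auto). split; [|split].
  - intros f1 f2 f3 H. unfold Phi. rewrite <- m_add by auto. f_equal.
    apply functional_extensionality; intro; auto.
  - intros a f1 f2 H. unfold Phi. rewrite <- m_scal by auto. f_equal.
    apply functional_extensionality; intro; auto.
  - destruct (classic NT) as [Hnt|Hnt].
    + destruct hF as [C [HC HF]]. exists C. intros f M Hf. apply (Phi_bound F C HC HF Hnt f M Hf).
    + exists 0. intros f M Hf. unfold Phi.
      replace (fun k => proj1_sig f (F k)) with (fun _ : G => 0).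
      * rewrite m_constE, Rabs_R0. lra.
      * apply functional_extensionality; intro k. rewrite (fb_triv _ _ Hnt Hf). auto.
Qed.

Lemma E_bd F C : 0 <= C -> (forall k, norm (F k) <= C) -> norm (E F) <= Rabs Cp * C.
Proof.
  intros HC HF. destruct (classic NT) as [Hnt|Hnt].
  - apply Rle_trans with (Cp * C). apply P_bd. apply Phi_bidual. exists C; auto.
    apply Phi_bound; auto. apply Rmult_le_compat_r; auto. apply Rle_abs.
  - rewrite (triv_norm Hnt). apply Rmult_le_pos; auto. apply Rabs_pos.
Qed.

Lemma bdd_add F1 F2 : bdd F1 -> bdd F2 -> bdd (fun k => vadd (F1 k) (F2 k)).
Proof.
  intros [C1 [H1 F1b]] [C2 [H2 F2b]]. exists (C1 + C2). split; [lra|].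
  intro k. eapply Rle_trans; [apply norm_triangle|]. specialize (F1b k); specialize (F2b k); lra.
Qed.

Lemma bdd_scal a F : bdd F -> bdd (fun k => vscal a (F k)).
Proof.
  intros [C [H Fb]]. exists (Rabs a * C). split. apply Rmult_le_pos; auto; apply Rabs_pos.
  intro k. rewrite norm_scal. apply Rmult_le_compat_l; auto. apply Rabs_pos.
Qed.

Lemma bdd_u g F : bdd F -> bdd (fun k => u g (F k)).
Proof.
  intros [C [H Fb]]. exists (Rabs Mu * C). split. apply Rmult_le_pos; auto; apply Rabs_pos.
  intro k. eapply Rle_trans; [apply u_bd|]. pose proof (norm_nonneg (F k)). specialize (Fb k).
  pose proof (Rle_abs Mu). pose proof (Rabs_pos Mu). nra.
Qed.

Lemma bdd_const x : bdd (fun _ => x).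
Proof. exists (norm x). split; [apply norm_nonneg|]. intros; lra. Qed.

Lemma E_add F1 F2 : bdd F1 -> bdd F2 -> E (fun k => vadd (F1 k) (F2 k)) = vadd (E F1) (E F2).
Proof.
  intros h1 h2. unfold E. apply P_add; try apply Phi_bidual; auto. apply bdd_add; auto.
  intro f. unfold Phi. rewrite <- m_add by (apply dual_bfun; auto). f_equal.
  apply functional_extensionality; intro k. apply (proj1 (dual_lin f)).
Qed.

Lemma E_scal a F : bdd F -> E (fun k => vscal a (F k)) = vscal a (E F).
Proof.
  intros h. unfold E. apply P_scal; try apply Phi_bidual; auto. apply bdd_scal; auto.
  intro f. unfold Phi. rewrite <- m_scal by (apply dual_bfun; auto). f_equal.
  apply functional_extensionality; intro k. apply (proj2 (dual_lin f)).
Qed.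

Lemma E_const x : E (fun _ => x) = x.
Proof.
  unfold E. transitivity (P (fun f => proj1_sig f x)); [|apply P_J]. f_equal. apply functional_extensionality; intro f.
  unfold Phi. apply m_constE.
Qed.

Lemma E_u g F : bdd F -> E (fun k => u g (F k)) = u g (E F).
Proof.
  intro h. unfold E. apply P_eq; try apply Phi_bidual; auto. apply bdd_u; auto.
  intros f f' Hf. unfold Phi. f_equal. apply functional_extensionality; intro k. auto.
Qed.

Lemma E_shift h F : bdd F -> E (fun k => F (gmul h k)) = E F.
Proof.
  intro hF. unfold E. f_equal. apply functional_extensionality; intro f. unfold Phi.
  apply (m_inv (fun k => proj1_sig f (F k))). apply dual_bfun; auto.
Qed.


Context (u_mul : forall g h x, u (gmul g h) x = u g (u h x)) (u_one : forall x, u gone x = x)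
  (Y : NSpace) (v : G -> Y -> Y) (v_lin : forall g, is_linmap (v g)) (Mv : R)
  (v_bd : forall g y, norm (v g y) <= Mv * norm y)
  (v_mul : forall g h y, v (gmul g h) y = v g (v h y)) (v_one : forall y, v gone y = y)
  (Y00 : Y -> Prop) (Y0 : Y00 vzero) (Yadd : forall x y, Y00 x -> Y00 y -> Y00 (vadd x y))
  (Yscal : forall a x, Y00 x -> Y00 (vscal a x)) (Yinv : forall g y, Y00 y -> Y00 (v g y))
  (Xinf : VSpace) (iota : X -> Xinf) (iota_lin : is_linmap iota)
  (iota_inj : forall x1 x2, iota x1 = iota x2 -> x1 = x2)
  (uinf : G -> Xinf -> Xinf) (uinf_lin : forall g, is_linmap (uinf g))
  (uinf_mul : forall g h x, uinf (gmul g h) x = uinf g (uinf h x)) (uinf_one : forall x, uinf gone x = x)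
  (uinf_iota : forall g x, uinf g (iota x) = iota (u g x))
  (Omega : Y -> Xinf) (Om_hom : forall a y, Y00 y -> Omega (vscal a y) = vscal a (Omega y))
  (L : G -> Y -> Xinf) (L_lin : forall g, is_linmap_on Y00 (L g))
  (K : R) (hT : forall g, exists a b, 0 <= a /\ 0 <= b /\ a * b <= K /\
          twisted_bdd_invertible Y00 iota Omega uinf v g (L g) a b).

Lemma Om0 : Omega vzero = vzero.
Proof. pose proof (Om_hom 0 vzero Y0) as H. rewrite !vscal0 in H. auto. Qed.

Lemma L0 g : L g vzero = vzero.
Proof. apply (lon_zero Y00); auto. Qed.

Definition beta (g : G) (w : Y) : X :=
  epsilon (inhabits vzero) (fun x => iota x = vsub (vadd (uinf g (Omega w)) (L g w)) (Omega (v g w))).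

Lemma beta_spec g w : Y00 w ->
  iota (beta g w) = vsub (vadd (uinf g (Omega w)) (L g w)) (Omega (v g w)).
Proof.
  intro Hw. destruct (hT g) as (a & b & _ & _ & _ & HT).
  unfold twisted_bdd_invertible in HT. destruct HT as [T1 _].
  destruct (T1 (Omega w) w) as [_ [x Hx]].
  - split; auto. exists vzero. rewrite (lin_zero iota iota_lin). unfold vsub. rewrite vadd_opp. auto.
  - unfold beta. apply (epsilon_spec (inhabits vzero) (fun x => iota x = _)). exists x. exact Hx.
Qed.

Lemma beta_bound : exists Bb, 0 <= Bb /\ forall g w, Y00 w -> norm (beta g w) <= Bb * norm w.
Proof.
  destruct (classic NT) as [[x0 Hx0]|Hnt].
  - exists (Rabs K * Rabs Mu). split. apply Rmult_le_pos; apply Rabs_pos.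
    intros g w Hw. destruct (hT g) as (a & b & Ha & Hb & Hab & HT).
    unfold twisted_bdd_invertible in HT. destruct HT as [_ [T2 _]].
    (* b >= 1/Mu *)
    assert (Hx0p : 0 < norm x0) by (pose proof (norm_nonneg x0); lra).
    assert (H1 : norm x0 + norm (@vzero Y) <= b * (norm (u g x0) + norm (@vzero Y))).
    { refine (proj2 (T2 (iota x0) vzero _ _ _ _)).
      - split; auto. exists x0. split; auto. rewrite Om0. unfold vsub.
        assert (Hz : vopp (@vzero Xinf) = vzero) by (symmetry; apply vopp_unique, vadd_zero).
        rewrite Hz, vadd_zero; auto.
      - split; auto. exists (u g x0).
        rewrite (lin_zero (v g) (v_lin g)), L0, Om0, uinf_iota. split; [vsolve|auto]. }
    rewrite norm_zero in H1.
    assert (H2 : norm (beta g w) + norm (v g w) <= a * (norm (@vzero X) + norm w)).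
    { refine (proj1 (T2 (Omega w) w _ _ _ _)).
      - split; auto. exists vzero. split; auto. rewrite (lin_zero iota iota_lin). vsolve.
      - split; auto. exists (beta g w). split; auto. apply beta_spec; auto. }
    rewrite norm_zero in H2. pose proof (norm_nonneg (v g w)). pose proof (norm_nonneg w).
    pose proof (u_bd g x0). pose proof (Rle_abs Mu). pose proof (Rle_abs K). pose proof (norm_nonneg (u g x0)).
    assert (Hb1 : 1 <= b * Rabs Mu).
    { assert (norm (u g x0) <= Rabs Mu * norm x0).
      { apply Rle_trans with (Mu * norm x0); [auto|]. apply Rmult_le_compat_r; auto; lra. }
      assert (b * norm (u g x0) <= b * (Rabs Mu * norm x0)) by (apply Rmult_le_compat_l; auto).
      assert (norm x0 * 1 <= norm x0 * (b * Rabs Mu)) by nra.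
      apply Rmult_le_reg_l with (norm x0); auto. }
    assert (a * 1 <= a * (b * Rabs Mu)) by (apply Rmult_le_compat_l; lra).
    assert (a * b * Rabs Mu <= K * Rabs Mu) by (apply Rmult_le_compat_r; [apply Rabs_pos|lra]).
    assert (K * Rabs Mu <= Rabs K * Rabs Mu) by (apply Rmult_le_compat_r; [apply Rabs_pos|lra]).
    assert (Ha2 : a <= Rabs K * Rabs Mu) by lra.
    assert (a * norm w <= Rabs K * Rabs Mu * norm w) by (apply Rmult_le_compat_r; lra).
    lra.
  - exists 0. split; [lra|]. intros. rewrite (triv_norm Hnt). lra.
Qed.

Context (Bb : R) (Bb_pos : 0 <= Bb) (Bb_bd : forall g w, Y00 w -> norm (beta g w) <= Bb * norm w).

Lemma vscal_sub {V : VSpace} c (x y : V) : vscal c (vsub x y) = vsub (vscal c x) (vscal c y).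
Proof. unfold vsub. rewrite vscal_distr_v, vscal_vopp. auto. Qed.

Lemma norm_opp {Z : NSpace} (x : Z) : norm (vopp x) = norm x.
Proof.
  assert (H : vopp x = vscal (-(1)) x) by (rewrite vscal_opp, vscal_one; auto).
  rewrite H, norm_scal, Rabs_Ropp, Rabs_R1. ring.
Qed.

Lemma norm_sub {Z : NSpace} (x y : Z) : norm (vsub x y) <= norm x + norm y.
Proof. unfold vsub. rewrite <- (norm_opp y). apply norm_triangle. Qed.

Lemma u_bd' g x : norm (u g x) <= Rabs Mu * norm x.
Proof. apply Rle_trans with (Mu * norm x); auto. apply Rmult_le_compat_r. apply norm_nonneg. apply Rle_abs. Qed.
Lemma v_bd' g x : norm (v g x) <= Rabs Mv * norm x.
Proof. apply Rle_trans with (Mv * norm x); auto. apply Rmult_le_compat_r. apply norm_nonneg. apply Rle_abs. Qed.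

Definition Fa (w : Y) : G -> X := fun k => u k (beta (ginv k) w).
Definition A (w : Y) : X := E (Fa w).

Lemma bdd_Fa w : Y00 w -> bdd (Fa w).
Proof.
  intro Hw. exists (Rabs Mu * (Bb * norm w)). split.
  - apply Rmult_le_pos. apply Rabs_pos. apply Rmult_le_pos; auto. apply norm_nonneg.
  - intro k. unfold Fa. eapply Rle_trans. apply u_bd'. apply Rmult_le_compat_l. apply Rabs_pos. auto.
Qed.

Definition Ca := Rabs Cp * (Rabs Mu * Bb).
Lemma Ca_pos : 0 <= Ca.
Proof. unfold Ca. apply Rmult_le_pos. apply Rabs_pos. apply Rmult_le_pos; auto. apply Rabs_pos. Qed.

Lemma A_bd w : Y00 w -> norm (A w) <= Ca * norm w.
Proof.
  intro Hw. unfold A, Ca. eapply Rle_trans. apply (E_bd _ (Rabs Mu * (Bb * norm w))).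
  - apply Rmult_le_pos. apply Rabs_pos. apply Rmult_le_pos; auto. apply norm_nonneg.
  - intro k. unfold Fa. eapply Rle_trans. apply u_bd'. apply Rmult_le_compat_l. apply Rabs_pos. auto.
  - right. ring.
Qed.

Definition Delta (a b : G) (w : Y) : X :=
  vsub (vsub (beta (gmul a b) w) (u a (beta b w))) (beta a (v b w)).

Lemma Delta_iota a b w : Y00 w ->
  iota (Delta a b w) = vsub (vsub (L (gmul a b) w) (uinf a (L b w))) (L a (v b w)).
Proof.
  intro Hw. unfold Delta. rewrite !(lin_sub iota iota_lin).
  rewrite <- uinf_iota. rewrite !beta_spec by auto.
  rewrite (lin_sub (uinf a) (uinf_lin a)), (lin_add (uinf a) (uinf_lin a)).
  rewrite <- uinf_mul, <- v_mul. vsolve.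
Qed.

Lemma Delta_add a b w1 w2 : Y00 w1 -> Y00 w2 ->
  Delta a b (vadd w1 w2) = vadd (Delta a b w1) (Delta a b w2).
Proof.
  intros H1 H2. apply iota_inj. rewrite (lin_add iota iota_lin), !Delta_iota by auto.
  rewrite (lin_add (v b) (v_lin b)), !(lon_add Y00 _ (L_lin _)) by auto.
  rewrite (lin_add (uinf a) (uinf_lin a)). vsolve.
Qed.

Lemma Delta_scal a b c w : Y00 w -> Delta a b (vscal c w) = vscal c (Delta a b w).
Proof.
  intros H1. apply iota_inj. rewrite (lin_scal iota iota_lin), !Delta_iota by auto.
  rewrite (lin_scal (v b) (v_lin b)), !(lon_scal Y00 _ (L_lin _)) by auto.
  rewrite (lin_scal (uinf a) (uinf_lin a)), !vscal_sub. auto.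
Qed.

Definition Bd := Bb + Rabs Mu * Bb + Bb * Rabs Mv.

Lemma Delta_bd a b w : Y00 w -> norm (Delta a b w) <= Bd * norm w.
Proof.
  intro Hw. unfold Delta, Bd.
  eapply Rle_trans. apply norm_sub. eapply Rle_trans. apply Rplus_le_compat_r. apply norm_sub.
  pose proof (Bb_bd (gmul a b) w Hw). pose proof (u_bd' a (beta b w)).
  pose proof (Bb_bd b w Hw). pose proof (Bb_bd a (v b w) (Yinv _ _ Hw)). pose proof (v_bd' b w).
  pose proof (Rabs_pos Mu). pose proof (Rabs_pos Mv). pose proof (norm_nonneg w).
  assert (Rabs Mu * norm (beta b w) <= Rabs Mu * (Bb * norm w)) by (apply Rmult_le_compat_l; auto).
  assert (Bb * norm (v b w) <= Bb * (Rabs Mv * norm w)) by (apply Rmult_le_compat_l; auto).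
  nra.
Qed.

Definition Psi (g : G) (y : Y) : X := E (fun k => u (gmul g k) (Delta (ginv k) (ginv g) (v g y))).

Lemma bdd_Psi g y : Y00 y -> bdd (fun k => u (gmul g k) (Delta (ginv k) (ginv g) (v g y))).
Proof.
  intro Hy. exists (Rabs Mu * (Bd * norm (v g y))). split.
  - apply Rmult_le_pos. apply Rabs_pos. apply Rmult_le_pos. unfold Bd.
    pose proof (Rabs_pos Mu). pose proof (Rabs_pos Mv). nra. apply norm_nonneg.
  - intro k. eapply Rle_trans. apply u_bd'. apply Rmult_le_compat_l. apply Rabs_pos. apply Delta_bd; auto.
Qed.

Lemma gmul_cancel (g k : G) : gmul (gmul g k) (ginv k) = g.
Proof. rewrite <- gmul_assoc, gmul_inv_r, gmul_one_r. auto. Qed.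

Lemma A_v g y : Y00 y ->
  A (v g y) = vadd (vadd (Psi g y) (u g (beta (ginv g) (v g y)))) (u g (A y)).
Proof.
  intro Hy. unfold A at 1. rewrite <- (E_shift g (Fa (v g y))) by (apply bdd_Fa; auto).
  assert (Hf : (fun k => Fa (v g y) (gmul g k)) =
     (fun k => vadd (vadd (u (gmul g k) (Delta (ginv k) (ginv g) (v g y))) (u g (beta (ginv g) (v g y))))
                    (u g (Fa y k)))).
  { apply functional_extensionality; intro k. unfold Fa.
    rewrite ginv_mul.
    assert (Hb : beta (gmul (ginv k) (ginv g)) (v g y) =
       vadd (vadd (Delta (ginv k) (ginv g) (v g y)) (u (ginv k) (beta (ginv g) (v g y))))
            (beta (ginv k) (v (ginv g) (v g y)))) by (unfold Delta; vsolve).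
    rewrite Hb, <- (v_mul (ginv g) g), gmul_inv_l, v_one.
    rewrite !(lin_add (u (gmul g k)) (u_lin _)).
    rewrite <- (u_mul (gmul g k) (ginv k)), gmul_cancel, (u_mul g k (beta (ginv k) y)). auto. }
  rewrite Hf. rewrite E_add, E_add, E_const, E_u.
  - unfold Psi, A. auto.
  - apply bdd_Fa; auto.
  - apply bdd_Psi; auto.
  - apply bdd_const.
  - apply bdd_add. apply bdd_Psi; auto. apply bdd_const.
  - apply bdd_u, bdd_Fa; auto.
Qed.

Definition Nn (y : Y) : Xinf := vsub (Omega y) (iota (A y)).
Definition dd (g : G) (y : Y) : Xinf := vsub (Nn (v g y)) (uinf g (Nn y)).

Lemma d_formula g y : Y00 y -> dd g y = vopp (vadd (uinf g (L (ginv g) (v g y))) (iota (Psi g y))).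
Proof.
  intro Hy. unfold dd, Nn. rewrite A_v by auto.
  rewrite (lin_sub (uinf g) (uinf_lin g)), uinf_iota.
  rewrite !(lin_add iota iota_lin).
  rewrite <- (uinf_iota g (beta (ginv g) (v g y))), beta_spec by auto.
  rewrite (lin_sub (uinf g) (uinf_lin g)), (lin_add (uinf g) (uinf_lin g)).
  rewrite <- (uinf_mul g (ginv g)), gmul_inv_r, uinf_one, <- (v_mul (ginv g) g), gmul_inv_l, v_one.
  vsolve.
Qed.

Lemma Psi_add g y1 y2 : Y00 y1 -> Y00 y2 -> Psi g (vadd y1 y2) = vadd (Psi g y1) (Psi g y2).
Proof.
  intros H1 H2. unfold Psi. rewrite <- E_add by (apply bdd_Psi; auto). f_equal.
  apply functional_extensionality; intro k.
  rewrite (lin_add (v g) (v_lin g)), Delta_add by auto. apply (lin_add _ (u_lin _)).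
Qed.

Lemma Psi_scal g c y : Y00 y -> Psi g (vscal c y) = vscal c (Psi g y).
Proof.
  intros H1. unfold Psi. rewrite <- E_scal by (apply bdd_Psi; auto). f_equal.
  apply functional_extensionality; intro k.
  rewrite (lin_scal (v g) (v_lin g)), Delta_scal by auto. apply (lin_scal _ (u_lin _)).
Qed.

Lemma d_lin g : is_linmap_on Y00 (dd g).
Proof.
  split.
  - intros y1 y2 H1 H2. rewrite !d_formula by auto.
    rewrite (lin_add (v g) (v_lin g)), (lon_add Y00 _ (L_lin _)) by auto.
    rewrite (lin_add (uinf g) (uinf_lin g)), Psi_add, (lin_add iota iota_lin) by auto. vsolve.
  - intros c y H. rewrite !d_formula by auto.
    rewrite (lin_scal (v g) (v_lin g)), (lon_scal Y00 _ (L_lin _)) by auto.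
    rewrite (lin_scal (uinf g) (uinf_lin g)), Psi_scal, (lin_scal iota iota_lin) by auto.
    rewrite vscal_vopp, vscal_distr_v. auto.
Qed.

Lemma d_cocycle g h y : dd (gmul g h) y = vadd (uinf g (dd h y)) (dd g (v h y)).
Proof. unfold dd. rewrite v_mul, uinf_mul, (lin_sub (uinf g) (uinf_lin g)). vsolve. Qed.

Lemma d_compat g y : vadd (vsub (uinf g (Omega y)) (Omega (v g y))) (dd g y) = iota (vsub (u g (A y)) (A (v g y))).
Proof. unfold dd, Nn. rewrite (lin_sub (uinf g) (uinf_lin g)), uinf_iota, (lin_sub iota iota_lin). vsolve. Qed.

Lemma d_diff g y : Y00 y -> vsub (dd g y) (L g y) = iota (vsub (vsub (u g (A y)) (A (v g y))) (beta g y)).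
Proof.
  intro Hy. unfold dd, Nn. rewrite (lin_sub (uinf g) (uinf_lin g)), uinf_iota, !(lin_sub iota iota_lin).
  rewrite beta_spec by auto. vsolve.
Qed.

Definition C1 := Rabs Mu * Ca + Ca * Rabs Mv.

Lemma C1_bd g y : Y00 y -> norm (vsub (u g (A y)) (A (v g y))) <= C1 * norm y.
Proof.
  intro Hy. unfold C1. eapply Rle_trans. apply norm_sub.
  pose proof (u_bd' g (A y)). pose proof (A_bd y Hy). pose proof (A_bd (v g y) (Yinv _ _ Hy)).
  pose proof (v_bd' g y). pose proof Ca_pos. pose proof (Rabs_pos Mu). pose proof (norm_nonneg y).
  assert (Rabs Mu * norm (A y) <= Rabs Mu * (Ca * norm y)) by (apply Rmult_le_compat_l; auto).
  assert (Ca * norm (v g y) <= Ca * (Rabs Mv * norm y)) by (apply Rmult_le_compat_l; auto).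
  nra.
Qed.

Lemma main_sec : exists d : G -> Y -> Xinf,
    compatible_via Y00 iota Omega uinf v d /\
    (forall g y, Y00 y -> inX iota (vsub (d g y) (L g y))) /\
    (exists C, forall g y, Y00 y -> norm y <= 1 -> inX_le iota (vsub (d g y) (L g y)) C).
Proof.
  exists dd. split; [|split].
  - split.
    + split. apply d_lin. intros; apply d_cocycle.
    + exists C1. intros g y Hy. exists (vsub (u g (A y)) (A (v g y))). split.
      * symmetry; apply d_compat.
      * apply C1_bd; auto.
  - intros g y Hy. eexists. symmetry. apply d_diff; auto.
  - exists (C1 + Bb). intros g y Hy Hy1. eexists. split. symmetry. apply d_diff; auto.
    eapply Rle_trans. apply norm_sub. pose proof (C1_bd g y Hy). pose proof (Bb_bd g y Hy).
    assert (0 <= C1) by (unfold C1; pose proof Ca_pos; pose proof (Rabs_pos Mu); pose proof (Rabs_pos Mv); nra).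
    pose proof (norm_nonneg y).
    assert (C1 * norm y <= C1 * 1) by (apply Rmult_le_compat_l; auto).
    assert (Bb * norm y <= Bb * 1) by (apply Rmult_le_compat_l; auto).
    lra.
Qed.

End Mean.

Theorem mainTheorem14
  (G : Group) (X Y : NSpace) (u : G -> X -> X) (v : G -> Y -> Y)
  (Y00 : Y -> Prop) (Xinf : VSpace) (iota : X -> Xinf) (uinf : G -> Xinf -> Xinf)
  (Omega : Y -> Xinf) (L : G -> Y -> Xinf)
  (hG : amenable G)
  (hX : Gspace X u) (hY : Gspace Y v)
  (hXc : G_complemented_in_bidual X u)
  (hset : QL_setting X Y u v Y00 Xinf iota uinf)
  (hOmega : quasi_linear Y00 iota Omega)
  (hLlin : forall g, is_linmap_on Y00 (L g))
  (hT : exists K, forall g, exists a b, 0 <= a /\ 0 <= b /\ a * b <= K /\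
          twisted_bdd_invertible Y00 iota Omega uinf v g (L g) a b) :
  exists d : G -> Y -> Xinf,
    compatible_via Y00 iota Omega uinf v d /\
    (forall g y, Y00 y -> inX iota (vsub (d g y) (L g y))) /\
    (exists C, forall g y, Y00 y -> norm y <= 1 -> inX_le iota (vsub (d g y) (L g y)) C).
Proof.
  destruct hG as [m (m_add & m_scal & m_pos & m_one & m_inv)].
  destruct hX as (_ & (u_lin & u_mul & u_one) & Mu & u_bd).
  destruct hY as (_ & (v_lin & v_mul & v_one) & Mv & v_bd).
  destruct hXc as (P & P_add & P_scal & (Cp & P_bd) & P_J & P_eq).
  destruct hset as ((Y0 & Yadd & Yscal) & _ & Yinv & iota_lin & iota_inj & (uinf_lin & uinf_mul & uinf_one) & uinf_iota).
  destruct hOmega as (Om_hom & _).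
  destruct hT as (K & hT).
  destruct (beta_bound G X u Mu u_bd Y v v_lin Y00 Y0 Yinv Xinf iota iota_lin uinf uinf_iota
              Omega Om_hom L hLlin K hT) as (Bb & Bb_pos & Bb_bd).
  eapply main_sec with (m := m) (u := u) (Mu := Mu) (P := P) (Cp := Cp) (Mv := Mv) (K := K) (Bb := Bb); eauto.
Qed.
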